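(* Let $\mathcal{F}\subset L_2(\mu)$ be a class of real-valued functions on $\mathcal{X}$, and let $\overline{\mathcal{F}}=\{\mathcal{O}f:f\in\mathcal{F}\}$ and $\mathcal{F}_\perp=\{f-\mathcal{O}f:f\in\mathcal{F}\}$. Assume the (empirical) Rademacher complexities below are well defined on $\mathcal{F}$, $\overline{\mathcal{F}}$ and $\mathcal{F}_\perp$. Then, with the data distributed as $T\sim\otimes^n\mu$, \[0\le \mathfrak{R}_n(\mathcal{F})-\mathfrak{R}_n(\overline{\mathcal{F}})\le \mathfrak{R}_n(\mathcal{F}_\perp)\] whenever the terms are finite.
   Context: $\mathcal{G}$ is a compact, second countable, Hausdorff topological group with Haar probability measure $\lambda$, acting measurably on a nonempty Polish space $\mathcal{X}$. $\mu$ is a $\mathcal{G}$-invariant Borel probability measure on $\mathcal{X}$ and $L_2(\mu)$ is the usual space of (classes of) square-integrable real functions. $\mathcal{O}f(x)=\int_\mathcal{G}f(gx)\,d\lambda(g)$. For $T=(x_1,\dots,x_n)\in\mathcal{X}^n$ and a class $\mathcal{H}$ of real functions, the empirical Rademacher complexity is $\mathrm{Rad}_T(\mathcal{H})=\mathbb{E}\big[\sup_{h\in\mathcal{H}}\big|\frac1n\sum_{i=1}^n\varsigma_ih(x_i)\big|\big]$ with $\varsigma_1,\dots,\varsigma_n$ i.i.d. uniform on $\{-1,1\}$; for random $T$ the Rademacher complexity is $\mathfrak{R}_n(\mathcal{H})=\mathbb{E}[\mathrm{Rad}_T(\mathcal{H})]$. *)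

(* Defs.v *)
From HB Require Import structures.
From mathcomp Require Import all_boot all_order all_algebra.
From mathcomp Require Import all_classical all_reals all_analysis.
From mathcomp Require Import measurable_realfun.
Set Implicit Arguments.
Unset Strict Implicit.
Unset Printing Implicit Defensive.
Import Order.TTheory GRing.Theory Num.Theory.
Local Open Scope classical_set_scope.
Local Open Scope ring_scope.

Definition borel (T : ptopologicalType) := g_sigma_algebraType (@open T).

Definition polish_space (R : realType) (X : topologicalType) : Prop :=
  (exists D : set X, countable D /\ dense D) /\
  exists dist : X -> X -> R,
    [/\ forall x y, dist x y = 0 <-> x = y,
        forall x y, dist x y = dist y x,
        forall x y z, dist x z <= dist x y + dist y z,
        forall A : set X, open A <->
          (forall x, A x -> exists2 e : R, 0 < e & [set y | dist x y < e] `<=` A)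
      &
        forall u : nat -> X,
          (forall e : R, 0 < e -> exists N, forall m k, (N <= m)%N -> (N <= k)%N ->
              dist (u m) (u k) < e) ->
          exists l : X, u @ \oo --> l].

Definition compact_sc_hausdorff_group (G : topologicalType)
    (mul : G -> G -> G) (inv : G -> G) (one : G) : Prop :=
  (forall a b c, mul a (mul b c) = mul (mul a b) c) /\
  (forall a, mul one a = a /\ mul a one = a) /\
  (forall a, mul (inv a) a = one /\ mul a (inv a) = one) /\
  continuous (fun p : G * G => mul p.1 p.2) /\
  continuous inv /\
  compact [set: G] /\
  hausdorff_space G /\
  @second_countable G.

Definition haar_probability (R : realType) (G : ptopologicalType)
    (mul : G -> G -> G) (lam : probability (borel G) R) : Prop :=
  forall (g : G) (A : set (borel G)), measurable A ->
    lam [set mul g a | a in A] = lam A.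

Definition measurable_group_action (G X : ptopologicalType)
    (mul : G -> G -> G) (one : G) (act : G -> X -> X) : Prop :=
  [/\ (forall x, act one x = x),
      (forall g h x, act (mul g h) x = act g (act h x))
    & measurable_fun [set: borel G * borel X]
        (fun p : borel G * borel X => (act p.1 p.2 : borel X))].

Definition invariant_measure (R : realType) (G X : ptopologicalType)
    (act : G -> X -> X) (mu : probability (borel X) R) : Prop :=
  forall (g : G) (A : set (borel X)), measurable A ->
    mu [set x | A (act g x)] = mu A.

Definition L2 (R : realType) (X : ptopologicalType)
    (mu : probability (borel X) R) (f : X -> R) : Prop :=
  measurable_fun [set: borel X] (f : borel X -> R) /\
  (\int[mu]_x ((f x) ^+ 2)%:E < +oo)%E.

Definition orbit_avg (R : realType) (G X : ptopologicalType)
    (lam : probability (borel G) R) (act : G -> X -> X) (f : X -> R) : X -> R :=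
  fun x => Rintegral lam [set: borel G] (fun g : borel G => f (act g x)).

(* empirical Rademacher complexity: the expectation over the Rademacher
   signs (uniform on {-1,1}^n) is written as the finite average. *)
Definition emp_rademacher (R : realType) (X : Type) (n : nat)
    (H : set (X -> R)) (t : n.-tuple X) : \bar R :=
  (\sum_(s : {ffun 'I_n -> bool})
     ((2 ^- n : R)%:E *
      ereal_sup [set (`| n%:R^-1 * \sum_(i < n)
                          ((if s i then 1 else -1) * h (tnth t i)) |)%:E
                | h in H]))%E.

Definition is_product_measure (R : realType) (X : ptopologicalType) (n : nat)
    (mu : probability (borel X) R)
    (P : probability (n.-tuple (borel X)) R) : Prop :=
  forall A : 'I_n -> set (borel X), (forall i, measurable (A i)) ->
    P [set t | forall i, A i (tnth t i)] = (\prod_(i < n) mu (A i))%E.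

Definition rademacher (R : realType) (X : ptopologicalType) (n : nat)
    (P : probability (n.-tuple (borel X)) R) (H : set (X -> R)) : \bar R :=
  (\int[P]_t emp_rademacher H t)%E.

(* Main.v *)
Require Import Defs.
From HB Require Import structures.
From mathcomp Require Import all_boot all_order all_algebra.
From mathcomp Require Import all_classical all_reals all_analysis.
From mathcomp Require Import measurable_realfun.
Import Order.TTheory GRing.Theory Num.Theory.
Local Open Scope classical_set_scope.
Local Open Scope ring_scope.
Local Open Scope ereal_scope.

Lemma L1 (R : realType) (y C : \bar R) (B : set (\bar R)) :
  (forall b, B b -> y + b <= C) -> y + ereal_sup B <= C.
Proof.
case: y => [r| |] H.
- rewrite -leeBrDl //; apply: ge_ereal_sup => b Bb; rewrite leeBrDl //; exact: H.
- case: (pselect (exists b, B b /\ b != -oo)) => [[b [Bb bN]]|nb].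
    have := H b Bb; rewrite addye // leye_eq => /eqP ->.
    exact: leey.
  have -> : ereal_sup B = -oo.
    apply/ereal_sup_ninfty => b Bb; apply/eqP; apply: contra_notT nb => bN.
    by exists b.
  by rewrite addeNy leNye.
- by rewrite addNye leNye.
Qed.

Lemma sup_choice (R : realType) (I : eqType) (A : I -> set (\bar R)) (w : I -> R)
  (r : seq I) (x C : \bar R) :
  uniq r -> (forall i, (0 < w i)%R) ->
  (forall c : I -> \bar R, (forall i, i \in r -> A i (c i)) ->
     x + \sum_(i <- r) (w i)%:E * c i <= C) ->
  x + \sum_(i <- r) (w i)%:E * ereal_sup (A i) <= C.
Proof.
elim: r x => [|i r IH] x ur wpos H.
  by rewrite big_nil; have := H (fun _ => 0) (fun i (hi : i \in [::]) => ltac:(by [])); rewrite big_nil.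
move: ur; rewrite /= => /andP[ir ur].
rewrite big_cons addeA; apply: IH => // c Hc.
rewrite addeAC -ereal_sup_pZl //; apply: L1 => _ [a Aa <-].
have := H (fun j => if j == i then a else c j).
rewrite big_cons eqxx addeA addeAC.
have -> : \sum_(j <- r) (w j)%:E * (if j == i then a else c j) =
          \sum_(j <- r) (w j)%:E * c j.
  apply: eq_big_seq => j jr; case: eqP => // ji.
  by move: ir; rewrite -ji jr.
apply => j; rewrite inE; case: eqP => [->//|_ /= jr]; exact: Hc.
Qed.

Lemma sup_abs_ge0 (R : realType) (T : Type) (H : set T) (a : T -> R) :
  H !=set0 -> 0 <= ereal_sup [set (`|a h|)%:E | h in H].
Proof.
move=> [h Hh]; apply: le_ereal_sup_tmp; exists (`|a h|)%:E; first by exists h.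
by rewrite lee_fin.
Qed.

Lemma emp_ge0 (R : realType) (X : Type) (n : nat) (H : set (X -> R)) (t : n.-tuple X) :
  H !=set0 -> 0 <= emp_rademacher H t.
Proof.
move=> H0; rewrite /emp_rademacher; apply: sume_ge0 => s _.
apply: mule_ge0; first by rewrite lee_fin.
exact: sup_abs_ge0.
Qed.

Lemma emp_triangle (R : realType) (X : Type) (n : nat) (F : set (X -> R))
   (O : (X -> R) -> X -> R) (t : n.-tuple X) : F !=set0 ->
  emp_rademacher F t <= emp_rademacher [set O f | f in F] t +
     emp_rademacher [set (fun x => (f x - O f x)%R) | f in F] t.
Proof.
move=> F0; rewrite /emp_rademacher -big_split /=; apply: lee_sum => s _.
have Fb : [set O f | f in F] !=set0.
  by case: F0 => f Ff; exists (O f); exists f.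
have Fp : [set (fun x => (f x - O f x)%R) | f in F] !=set0.
  by case: F0 => f Ff; exists (fun x => (f x - O f x)%R); exists f.
rewrite -ge0_muleDr; [|exact: sup_abs_ge0|exact: sup_abs_ge0].
apply: lee_wpmul2l; first by rewrite lee_fin.
apply: ge_ereal_sup => _ [f Ff <-].
set a := (n%:R^-1 * _)%R.
set b := (n%:R^-1 * \sum_(i < n) ((if s i then 1 else -1) * O f (tnth t i)))%R.
set c := (n%:R^-1 * \sum_(i < n) ((if s i then 1 else -1) *
            (f (tnth t i) - O f (tnth t i))))%R.
have -> : a = (b + c)%R.
  rewrite /a /b /c -mulrDr -big_split /=; congr (_ * _)%R.
  by apply: eq_bigr => i _; rewrite -mulrDr addrC subrK.
apply: le_trans (_ : (`|b|)%:E + (`|c|)%:E <= _).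
  by rewrite -EFinD lee_fin ler_normD.
apply: leeD; apply: ereal_sup_ubound.
  by exists (O f); [exists f|].
by exists (fun x => (f x - O f x)%R); [exists f|].
Qed.

Definition actT (G X : Type) (act : G -> X -> X) (n : nat) (g : G)
  (t : n.-tuple X) : n.-tuple X := map_tuple (act g) t.
Arguments actT {G X} act {n} g t.

Lemma mactT (G X : ptopologicalType) (mul : G -> G -> G) (one : G)
  (act : G -> X -> X) (n : nat) :
  measurable_group_action mul one act ->
  measurable_fun [set: n.-tuple (borel X) * borel G]
    (fun p : n.-tuple (borel X) * borel G => (actT act p.2 p.1 : n.-tuple (borel X))).
Proof.
move=> [_ _ ma]; apply/measurable_fun_tnthP => i.
have -> : ((fun t : n.-tuple (borel X) => tnth t i) \o (fun p : n.-tuple (borel X) * borel G => (actT act p.2 p.1 : n.-tuple (borel X)))) =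
   (fun p : borel G * borel X => (act p.1 p.2 : borel X)) \o
   (fun p : n.-tuple (borel X) * borel G => (p.2, tnth p.1 i)).
  by apply: funext => p /=; rewrite /actT tnth_map.
apply: measurableT_comp ma _; apply: measurable_fun_pair.
  exact: measurable_snd.
exact: measurableT_comp (@measurable_tnth _ (borel X) n i) measurable_fst.
Qed.

Lemma bigsetI_seqP (T : Type) (I : eqType) (r : seq I) (F : I -> set T) (t : T) :
  (\big[setI/setT]_(i <- r) F i) t <-> (forall i, i \in r -> F i t).
Proof.
elim: r => [|i r IH]; first by rewrite big_nil; split.
rewrite big_cons; split.
  move=> [Fi /IH H] j; rewrite inE => /orP[/eqP ->|jr]; [exact: Fi|exact: H].
move=> H; split; first by apply: H; rewrite inE eqxx.
by apply/IH => j jr; apply: H; rewrite inE jr orbT.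
Qed.

Definition rects d (T : measurableType d) (n : nat) : set (set (n.-tuple T)) :=
  [set [set t : n.-tuple T | forall i, A i (tnth t i)] |
     A in [set A : 'I_n -> set T | forall i, measurable (A i)]].

Lemma rects_measurable d (T : measurableType d) (n : nat) (A : 'I_n -> set T) :
  (forall i, measurable (A i)) ->
  measurable [set t : n.-tuple T | forall i, A i (tnth t i)].
Proof.
move=> mA.
have -> : [set t : n.-tuple T | forall i, A i (tnth t i)] =
  \big[setI/setT]_(i <- enum 'I_n) ((fun t : n.-tuple T => tnth t i) @^-1` A i).
  apply/seteqP; split => t /=.
    by move=> H; apply/bigsetI_seqP => i _; exact: H.
  move/bigsetI_seqP => H i; apply: H.
  by rewrite mem_enum.
apply: bigsetI_measurable => i _.
by rewrite -[X in measurable X]setTI; apply: measurable_tnth.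
Qed.

Lemma rects_setI d (T : measurableType d) (n : nat) : setI_closed (@rects d T n).
Proof.
move=> _ _ [A mA <-] [B mB <-]; exists (fun i => A i `&` B i).
  by move=> i; apply: measurableI; [exact: mA|exact: mB].
apply/seteqP; split => t /=.
  by move=> H; split => i; case: (H i).
by move=> [HA HB] i; split; [exact: HA|exact: HB].
Qed.

Lemma rects_gen d (T : measurableType d) (n : nat) :
  @measurable _ (n.-tuple T) = <<s @rects d T n >>.
Proof.
apply/seteqP; split; last first.
  apply: smallest_sub; first exact: sigma_algebra_measurable.
  by move=> _ [A mA <-]; exact: rects_measurable.
change (g_sigma_preimage (fun i (t : n.-tuple T) => tnth t i) `<=` <<s @rects d T n >>).
apply: smallest_sub; first exact: smallest_sigma_algebra.
move=> S; elim/big_ind: _.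
- by [].
- by move=> U V HU HV [/HU|/HV].
move=> i _ [B mB <-]; apply: sub_sigma_algebra.
exists (fun j => if j == i then B else setT).
  by move=> j; case: eqP.
apply/seteqP; split => t /=.
  by move=> /(_ i); rewrite eqxx.
by move=> [_ Bt] j; case: eqP => [->|].
Qed.

Lemma tuple_measure_eq d (T : measurableType d) (n : nat) (R : realType)
  (m1 m2 : measure (n.-tuple T) R) : m1 setT < +oo ->
  (forall A : 'I_n -> set T, (forall i, measurable (A i)) ->
     m1 [set t | forall i, A i (tnth t i)] = m2 [set t | forall i, A i (tnth t i)]) ->
  forall B, measurable B -> m1 B = m2 B.
Proof.
move=> m1T H; apply: (measure_unique (@rects d T n) (fun _ => setT)).
- exact: rects_gen.
- exact: rects_setI.
- move=> _; exists (fun _ => setT) => //.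
  by apply/seteqP; split.
- by rewrite bigcup_const.
- by move=> _ [A mA <-]; exact: H.
- by move=> _.
Qed.

Lemma act_measurable (G X : ptopologicalType) (mul : G -> G -> G) (one : G)
  (act : G -> X -> X) (g : G) : measurable_group_action mul one act ->
  measurable_fun [set: borel X] (act g : borel X -> borel X).
Proof.
move=> [_ _ ma].
have -> : (act g : borel X -> borel X) =
  (fun p : borel G * borel X => (act p.1 p.2 : borel X)) \o (fun x : borel X => ((g : borel G), x)).
  by [].
by apply: measurableT_comp ma _; apply: measurable_fun_pair.

Qed.

Lemma actT_measurable (G X : ptopologicalType) (mul : G -> G -> G) (one : G)
  (act : G -> X -> X) (n : nat) (g : G) : measurable_group_action mul one act ->
  measurable_fun [set: n.-tuple (borel X)] (actT act g : n.-tuple (borel X) -> n.-tuple (borel X)).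
Proof.
move=> ma.
have -> : (actT act g : n.-tuple (borel X) -> n.-tuple (borel X)) =
  (fun p : n.-tuple (borel X) * borel G => (actT act p.2 p.1 : n.-tuple (borel X))) \o
  (fun t : n.-tuple (borel X) => (t, (g : borel G))) by [].
by apply: measurableT_comp (@mactT _ _ _ _ _ n ma) _; apply: measurable_fun_pair.
Qed.

Lemma P_invariant (R : realType) (G X : ptopologicalType) (mul : G -> G -> G) (one : G)
  (act : G -> X -> X) (mu : probability (borel X) R)
  (n : nat) (P : probability (n.-tuple (borel X)) R) (g : G) :
  measurable_group_action mul one act -> invariant_measure act mu ->
  is_product_measure mu P ->
  forall B, measurable B -> P ((actT act g : n.-tuple (borel X) -> n.-tuple (borel X)) @^-1` B) = P B.
Proof.
move=> ma imu pP.
have mphi := @actT_measurable _ _ _ _ _ n g ma.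
have := @tuple_measure_eq _ _ n R (pushforward P (actT act g : n.-tuple (borel X) -> n.-tuple (borel X))) P.
move/(_ mphi); rewrite /pushforward; apply.
  change (P ((actT act g : n.-tuple (borel X) -> n.-tuple (borel X)) @^-1` setT) < +oo).
  by rewrite preimage_setT probability_setT ltry.
move=> A mA.
change (P ((actT act g : n.-tuple (borel X) -> n.-tuple (borel X)) @^-1`
     [set t | forall i, A i (tnth t i)]) = P [set t | forall i, A i (tnth t i)]).
have mA' : forall i, measurable [set x : borel X | A i (act g x)].
  move=> i; rewrite -[X in measurable X]setTI.
  exact: (@act_measurable _ _ _ _ _ g ma) _ (mA i).
have -> : (actT act g : n.-tuple (borel X) -> n.-tuple (borel X)) @^-1`
     [set t | forall i, A i (tnth t i)] =
   [set t : n.-tuple (borel X) | forall i, [set x : borel X | A i (act g x)] (tnth t i)].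
  by apply/seteqP; split => t /=; rewrite /actT; move=> H i; [rewrite -tnth_map|rewrite tnth_map]; apply: H.
rewrite (pP _ mA') (pP _ mA); apply: eq_bigr => i _.
exact: imu.
Qed.

Lemma int_invariant (R : realType) (G X : ptopologicalType) (mul : G -> G -> G) (one : G)
  (act : G -> X -> X) (mu : probability (borel X) R)
  (n : nat) (P : probability (n.-tuple (borel X)) R) (g : G)
  (f : n.-tuple (borel X) -> \bar R) :
  measurable_group_action mul one act -> invariant_measure act mu ->
  is_product_measure mu P ->
  measurable_fun setT f -> (forall t, 0 <= f t) ->
  \int[P]_t f (actT act g t) = \int[P]_t f t.
Proof.
move=> ma imu pP mf f0.
have mphi := @actT_measurable _ _ _ _ _ n g ma.
have := ge0_integral_pushforward mphi P measurableT mf (fun y _ => f0 y).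
rewrite preimage_setT => <-.
apply: eq_measure_integral => A mA _.
change (P ((actT act g : n.-tuple (borel X) -> n.-tuple (borel X)) @^-1` A) = P A).
exact: (@P_invariant _ _ _ _ _ _ _ _ _ g ma imu pP A mA).
Qed.

Lemma K0 d (T : measurableType d) (R : realType) (lam : measure T R) (n : nat)
  (phi : 'I_n -> T -> R) (c : R) (a : 'I_n -> R) :
  (forall i, lam.-integrable setT (fun g => (phi i g)%:E)) ->
  (`| c * \sum_(i < n) (a i * Rintegral lam setT (phi i)) |)%R%:E <=
  \int[lam]_g (`| c * \sum_(i < n) (a i * phi i g) |)%R%:E.
Proof.
move=> iphi.
have E : (fun g => (c * \sum_(i < n) (a i * phi i g))%R%:E) =
         (fun g => c%:E * \sum_(i < n) ((a i)%:E * (phi i g)%:E)).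
  apply: funext => g; rewrite EFinM -sumEFin; congr (_ * _).
have ipsi : lam.-integrable setT (fun g => (c * \sum_(i < n) (a i * phi i g))%R%:E).
  rewrite E; apply: integrableZl => //; apply: integrable_sum => // i _.
  exact: integrableZl.
rewrite -abse_EFin.
have -> : (c * \sum_(i < n) (a i * Rintegral lam setT (phi i)))%R%:E =
          \int[lam]_g (c * \sum_(i < n) (a i * phi i g))%R%:E.
  rewrite E integralZl //; last first.
    by apply: integrable_sum => // i _; exact: integrableZl.
  rewrite integral_sum //; last by move=> i; exact: integrableZl.
  rewrite EFinM -sumEFin; congr (_ * _); apply: eq_bigr => i _.
  rewrite integralZl // EFinM; congr (_ * _).
  by rewrite /Rintegral fineK //; exact: integrable_fin_num.
under [X in _ <= X]eq_integral do rewrite -abse_EFin.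
apply: le_abse_integral => //.
exact: measurable_int ipsi.
Qed.

Lemma K0m d (T : measurableType d) (R : realType) (lam : measure T R) (n : nat)
  (phi : 'I_n -> T -> R) (c : R) (a : 'I_n -> R) :
  (forall i, lam.-integrable setT (fun g => (phi i g)%:E)) ->
  measurable_fun setT (fun g => (`| c * \sum_(i < n) (a i * phi i g) |)%R%:E).
Proof.
move=> iphi; apply/measurable_EFinP.
change (measurable_fun setT ((@Num.Def.normr R R) \o (fun g => c * \sum_(i < n) (a i * phi i g))%R)).
apply: measurableT_comp => //.
apply: measurable_funM => //; apply: measurable_sum => i.
apply: measurable_funM => //; apply/measurable_EFinP.
exact: measurable_int (iphi i).
Qed.

Lemma Kpt (R : realType) (G X : ptopologicalType) (mul : G -> G -> G) (one : G)
  (act : G -> X -> X) (lam : probability (borel G) R)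
  (n : nat) (F : set (X -> R)) (t : n.-tuple (borel X)) :
  measurable_group_action mul one act ->
  (forall f, F f -> forall x : X,
     lam.-integrable [set: borel G] (fun g : borel G => (f (act g x))%:E)) ->
  measurable_fun [set: n.-tuple (borel X)] (fun t : n.-tuple (borel X) => emp_rademacher F t) ->
  F !=set0 ->
  emp_rademacher [set orbit_avg lam act f | f in F] t <=
    \int[lam]_g emp_rademacher F (actT act g t).
Proof.
move=> ma iF mRF F0.
rewrite /emp_rademacher -[X in X <= _]add0e.
apply: sup_choice; [exact: index_enum_uniq| |].
  by move=> _; rewrite invr_gt0 exprn_gt0.
move=> c Hc; rewrite add0e.
have H : forall s : {ffun 'I_n -> bool}, exists f : X -> R, F f /\
   c s = (`| n%:R^-1 * \sum_(i < n) ((if s i then 1 else -1) *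
           orbit_avg lam act f (tnth t i)) |)%R%:E.
  move=> s; have [_ [f Ff <-] <-] := Hc s (mem_index_enum s).
  by exists f.
have [fs Hfs] := choice H.
pose h (s : {ffun 'I_n -> bool}) (g : borel G) := (`| n%:R^-1 * \sum_(i < n) ((if s i then 1 else -1) *
           fs s (act g (tnth t i))) |)%R%:E.
have ih : forall s i, lam.-integrable [set: borel G]
    (fun g : borel G => (fs s (act g (tnth t i)))%:E).
  by move=> s i; apply: iF; case: (Hfs s).
have mh : forall s, measurable_fun [set: borel G] (h s).
  move=> s; exact: (@K0m _ _ _ lam n (fun i (g : borel G) => fs s (act g (tnth t i))) n%:R^-1
    (fun i => if s i then 1 else -1)%R (ih s)).
have h0 : forall s g, 0 <= h s g by move=> s g; rewrite lee_fin.
apply: (@le_trans _ _ (\sum_(s : {ffun 'I_n -> bool}) (2 ^- n : R)%:E * \int[lam]_g h s g)).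
  apply: lee_sum => s _; rewrite (Hfs s).2; apply: lee_wpmul2l; first by rewrite lee_fin.
  exact: (@K0 _ _ _ lam n (fun i (g : borel G) => fs s (act g (tnth t i))) n%:R^-1
    (fun i => if s i then 1 else -1)%R (ih s)).
apply: (@le_trans _ _ (\int[lam]_g \sum_(s : {ffun 'I_n -> bool}) (2 ^- n : R)%:E * h s g)).
  rewrite ge0_integral_sum //; last first.
  - by move=> s g _; apply: mule_ge0; rewrite ?lee_fin.
  - by move=> s; apply: measurable_funeM.
  by apply: lee_sum => s _; rewrite ge0_integralZl // lee_fin.
apply: ge0_le_integral => //.
- by move=> g _; apply: sume_ge0 => s _; apply: mule_ge0; rewrite ?lee_fin.
- by apply: emeasurable_sum => s; apply: measurable_funeM.
- change (measurable_fun setT ((fun t => emp_rademacher F t) \o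
    ((fun p : n.-tuple (borel X) * borel G => (actT act p.2 p.1 : n.-tuple (borel X))) \o
     (fun g : borel G => (t, g))))).
  apply: measurableT_comp mRF _; apply: measurableT_comp (@mactT _ _ _ _ _ n ma) _.
  by apply: measurable_fun_pair.
move=> g _; apply: lee_sum => s _; apply: lee_wpmul2l; first by rewrite lee_fin.
apply: ereal_sup_ubound; exists (fs s); first by case: (Hfs s).
rewrite /h /actT; congr (`| _ * _ |)%:E; apply: eq_bigr => i _.
by rewrite tnth_map.
Qed.

Lemma emp0 (R : realType) (X : Type) (n : nat) (t : n.-tuple X) :
  emp_rademacher (@set0 (X -> R)) t = -oo.
Proof.
rewrite /emp_rademacher (bigD1 [ffun _ => false]) //=.
have -> : ereal_sup [set (`| n%:R^-1 * \sum_(i < n) ((if [ffun _ => false] i then 1 else -1) * h (tnth t i)) |)%R%:E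
   | h in @set0 (X -> R)] = -oo.
  by apply/ereal_sup_ninfty => _ [h []].
by rewrite muleC gt0_mulNye ?lte_fin ?invr_gt0 ?exprn_gt0.
Qed.

Local Close Scope ereal_scope.

Theorem proposition3p11 (R : realType)
    (G : ptopologicalType) (mul : G -> G -> G) (inv : G -> G) (one : G)
    (lam : probability (borel G) R)
    (X : ptopologicalType) (act : G -> X -> X)
    (mu : probability (borel X) R)
    (n : nat) (P : probability (n.-tuple (borel X)) R)
    (F : set (X -> R)) :
  compact_sc_hausdorff_group mul inv one ->
  haar_probability mul lam ->
  polish_space R X ->
  measurable_group_action mul one act ->
  invariant_measure act mu ->
  is_product_measure mu P ->
  (forall f, F f -> L2 mu f) ->
  (* the orbit averages O f are well defined *)
  (forall f, F f -> forall x : X,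
     lam.-integrable [set: borel G] (fun g : borel G => (f (act g x))%:E)) ->
  let Fbar := [set orbit_avg lam act f | f in F] in
  let Fperp := [set (fun x => f x - orbit_avg lam act f x) | f in F] in
  (* the (empirical) Rademacher complexities are well defined *)
  measurable_fun [set: n.-tuple (borel X)] (fun t : n.-tuple (borel X) => emp_rademacher F t) ->
  measurable_fun [set: n.-tuple (borel X)] (fun t : n.-tuple (borel X) => emp_rademacher Fbar t) ->
  measurable_fun [set: n.-tuple (borel X)] (fun t : n.-tuple (borel X) => emp_rademacher Fperp t) ->
  (* whenever the terms are finite *)
  rademacher P F \is a fin_num ->
  rademacher P Fbar \is a fin_num ->
  rademacher P Fperp \is a fin_num ->
  (0 <= rademacher P F - rademacher P Fbar <= rademacher P Fperp)%E.
Proof.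
move=> _ _ _ ma imu pP _ iF Fbar Fperp mRF mRbar mRperp finF finbar finperp.
Local Open Scope ereal_scope.
have F0 : F !=set0.
  case: (pselect (F !=set0)) => // nF0.
  have Fe : F = set0 by apply/seteqP; split => f Ff //; apply: nF0; exists f.
  move: finF; rewrite /rademacher Fe.
  have -> : (fun t : n.-tuple (borel X) => emp_rademacher (@set0 (X -> R)) t) = cst -oo.
    by apply: funext => t; exact: emp0.
  rewrite integral_cst // (_ : (P : measure _ R) _ = 1); last exact: probability_setT.
  by rewrite gt0_mulNye // lte01.
have Fb0 : Fbar !=set0 by case: F0 => f Ff; exists (orbit_avg lam act f); exists f.
have Fp0 : Fperp !=set0.
  by case: F0 => f Ff; exists (fun x => (f x - orbit_avg lam act f x)%R); exists f.
have up : rademacher P F <= rademacher P Fbar + rademacher P Fperp.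
  rewrite /rademacher -ge0_integralD //; last 2 first.
  - by move=> t _; exact: emp_ge0.
  - by move=> t _; exact: emp_ge0.
  apply: ge0_le_integral => //.
  - by move=> t _; exact: emp_ge0.
  - by apply: emeasurable_funD.
  - by move=> t _; exact: (@emp_triangle _ _ n F (orbit_avg lam act) t F0).
have low : rademacher P Fbar <= rademacher P F.
  pose Phi (p : n.-tuple (borel X) * borel G) := emp_rademacher F (actT act p.2 p.1).
  have mPhi : measurable_fun setT Phi.
    exact: measurableT_comp mRF (@mactT _ _ _ _ _ n ma).
  have Phi0 : forall p, 0 <= Phi p by move=> p; exact: emp_ge0.
  apply: (@le_trans _ _ (\int[P]_t fubini_F lam Phi t)).
    apply: ge0_le_integral => //.
    - by move=> t _; exact: emp_ge0.
    - exact: measurable_fun_fubini_tonelli_F.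
    - by move=> t _; exact: (@Kpt _ _ _ mul one act lam n F t ma iF mRF F0).
  rewrite -fubini_tonelli1 // fubini_tonelli2 //.
  have -> : fubini_G P Phi = cst (rademacher P F).
    apply: funext => g; rewrite /fubini_G /Phi /rademacher /=.
    exact: (@int_invariant _ _ _ _ _ _ _ _ P g (fun t => emp_rademacher F t) ma imu pP mRF
      (fun t => @emp_ge0 _ _ n F t F0)).
  by rewrite integral_cst // (_ : (lam : measure _ R) _ = 1) ?mule1 //; exact: probability_setT.
apply/andP; split.
  by rewrite sube_ge0 ?finbar.
by rewrite leeBlDl.
Qed.
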